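(* For an affine lattice ${\mathcal L}\subset\mathbb{R}^n$ write ${\mathcal L}_0={\mathcal L}-{\mathcal L}$ for the lattice of which it is a translate. Let $g\in G$. Then $(\mathbb{Z}^ng)_0\cap(\{{\bf 0}\}\times\mathbb{R}^m)\subset(\mathbb{Z}^nhg)_0\cap(\{{\bf 0}\}\times\mathbb{R}^m)$ for all $h\in H_g$, and these two sets are equal for almost all $h\in H_g$ (with respect to Haar measure on $H_g$).
   Context: $n=d+m$, $\mathbb{R}^n=\mathbb{R}^d\times\mathbb{R}^m$. $G=\operatorname{ASL}(n,\mathbb{R})$ with $(M,{\boldsymbol\xi})(M',{\boldsymbol\xi}')=(MM',{\boldsymbol\xi}M'+{\boldsymbol\xi}')$, acting on row vectors by ${\boldsymbol y}\mapsto{\boldsymbol y}M+{\boldsymbol\xi}$; $\Gamma=\operatorname{ASL}(n,\mathbb{Z})$. $\varphi_g(A,{\boldsymbol x})=g\bigl(\operatorname{diag}(A,1_m),({\boldsymbol x},{\bf 0})\bigr)g^{-1}$ for $(A,{\boldsymbol x})\in\operatorname{ASL}(d,\mathbb{R})$. $H_g$ is the unique closed connected subgroup of $G$ such that $\Gamma\cap H_g$ is a lattice in $H_g$, $\varphi_g(\operatorname{SL}(d,\mathbb{R}))\subset H_g$, and the closure of $\Gamma\backslash\Gamma\varphi_g(\operatorname{SL}(d,\mathbb{R}))$ in $\Gamma\backslash G$ is $\Gamma\backslash\Gamma H_g$. *)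

(* Defs.v *)
From HB Require Import structures.
From mathcomp Require Import all_boot all_order all_algebra.
From mathcomp Require Import all_classical all_reals all_analysis.
Set Implicit Arguments. Unset Strict Implicit. Unset Printing Implicit Defensive.
Import Order.TTheory GRing.Theory Num.Theory.
Import numFieldNormedType.Exports.
Local Open Scope classical_set_scope.
Local Open Scope ring_scope.

(* ambient space containing G = ASL(n,R), n = d + m:
   pairs (M, xi) with M an n x n matrix and xi a row vector *)
Notation Amb R d m := ('M[R]_(d + m) * 'rV[R]_(d + m))%type.

Notation BorelA R d m := (g_sigma_algebraType (@open (Amb R d m))).

Section ASL.
Variables (R : realType) (d m : nat).

Definition aslmul (g h : Amb R d m) : Amb R d m := (g.1 *m h.1, g.2 *m h.1 + h.2).
Definition aslone : Amb R d m := (1%:M, 0).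
Definition aslinv (g : Amb R d m) : Amb R d m := (invmx g.1, - (g.2 *m invmx g.1)).

Definition inG : set (Amb R d m) := [set g : Amb R d m | \det g.1 = 1].

Definition Gamma : set (Amb R d m) :=
  [set g : Amb R d m | \det g.1 = 1 /\ (forall i j, g.1 i j \is a Num.int)
           /\ (forall j : 'I_(d + m), g.2 ord0 j \is a Num.int)].

Definition actA (y : 'rV[R]_(d + m)) (g : Amb R d m) : 'rV[R]_(d + m) :=
  y *m g.1 + g.2.

Definition Zn : set 'rV[R]_(d + m) := [set y | forall j : 'I_(d + m), y ord0 j \is a Num.int].

Definition Zng (g : Amb R d m) : set 'rV[R]_(d + m) := [set actA y g | y in Zn].

Definition lat0 (L : set 'rV[R]_(d + m)) : set 'rV[R]_(d + m) :=
  [set a - b | a in L & b in L].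

Definition zeroRm : set 'rV[R]_(d + m) :=
  [set v | forall i : 'I_(d + m), (i < d)%N -> v ord0 i = 0].

Definition phiSL (g : Amb R d m) : set (Amb R d m) :=
  [set aslmul (aslmul g (block_mx A 0 0 1%:M, 0)) (aslinv g)
    | A in [set A : 'M[R]_d | \det A = 1]].

Definition setmulA (S T : set (Amb R d m)) : set (Amb R d m) :=
  [set aslmul x.1 x.2 | x in S `*` T].

Definition is_subgroupG (H : set (Amb R d m)) : Prop :=
  H `<=` inG /\ H aslone /\ (forall x y, H x -> H y -> H (aslmul x y))
  /\ (forall x, H x -> H (aslinv x)).


(* left (resp. right) Haar measure on the closed subgroup H, realized as a
   Borel measure on the ambient space concentrated on H *)
Definition is_left_haar (H : set (Amb R d m))
  (mu : {measure set (BorelA R d m) -> \bar R}) : Prop :=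
  mu (~` H) = 0%E /\
  (forall h (E : set (BorelA R d m)), H h -> measurable E ->
      mu (aslmul h @` E) = mu E) /\
  (forall K : set (Amb R d m), compact K -> (mu K < +oo)%E) /\
  (0 < mu H)%E.

Definition is_right_haar (H : set (Amb R d m))
  (mu : {measure set (BorelA R d m) -> \bar R}) : Prop :=
  mu (~` H) = 0%E /\
  (forall h (E : set (BorelA R d m)), H h -> measurable E ->
      mu ((fun x => aslmul x h) @` E) = mu E) /\
  (forall K : set (Amb R d m), compact K -> (mu K < +oo)%E) /\
  (0 < mu H)%E.

(* Gamma /\ H is a lattice in H: Gamma \cap H \ H has finite invariant
   volume, i.e. some Borel fundamental domain for the left action of
   Gamma \cap H on H has finite right Haar measure *)
Definition lattice_in (Gam H : set (Amb R d m)) : Prop :=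
  exists (mu : {measure set (BorelA R d m) -> \bar R}) (F : set (BorelA R d m)),
    is_right_haar H mu /\ measurable F /\ F `<=` H /\
    (forall h, H h -> exists gam, (Gam `&` H) gam /\ F (aslmul (aslinv gam) h)) /\
    (forall h gam gam', H h -> (Gam `&` H) gam -> (Gam `&` H) gam' ->
        F (aslmul (aslinv gam) h) -> F (aslmul (aslinv gam') h) -> gam = gam') /\
    (mu F < +oo)%E.

Definition is_Hg (g : Amb R d m) (H : set (Amb R d m)) : Prop :=
  is_subgroupG H /\ closed H /\ connected H /\
  lattice_in Gamma H /\ phiSL g `<=` H /\
  closure (setmulA Gamma (phiSL g)) = setmulA Gamma H.

End ASL.

(* Main.v *)
Require Import Defs.
From HB Require Import structures.
From mathcomp Require Import all_boot all_order all_algebra.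
From mathcomp Require Import all_classical all_reals all_analysis.
From mathcomp Require Import zify finmap.
From mathcomp.algebra_tactics Require Import ring.
Import Order.TTheory GRing.Theory Num.Theory.
Import numFieldNormedType.Exports.
Local Open Scope classical_set_scope.
Local Open Scope ring_scope.
Set Implicit Arguments. Unset Strict Implicit. Unset Printing Implicit Defensive.
Section Cont.
Variables (R : realType) (T : topologicalType).

Definition cmx p q (X : T -> 'M[R]_(p,q)) := forall i j, continuous (fun t => X t i j).

Lemma cont_sum (I : Type) (r : seq I) (P : pred I) (F : I -> T -> R) :
  (forall i, continuous (F i)) -> continuous (fun t => \sum_(i <- r | P i) F i t).
Proof.
move=> cF; elim: r => [|a r IH].
  under eq_fun do rewrite big_nil. by move=> x; apply: cst_continuous.
under eq_fun do rewrite big_cons.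
case: (P a) => //.
move=> x; exact: (continuousD (cF a x) (IH x)).
Qed.

Lemma cont_prod (I : Type) (r : seq I) (P : pred I) (F : I -> T -> R) :
  (forall i, continuous (F i)) -> continuous (fun t => \prod_(i <- r | P i) F i t).
Proof.
move=> cF; elim: r => [|a r IH].
  under eq_fun do rewrite big_nil. by move=> x; apply: cst_continuous.
under eq_fun do rewrite big_cons.
case: (P a) => //.
move=> x; exact: (continuousM (cF a x) (IH x)).
Qed.

Lemma cont_mul (f g : T -> R) : continuous f -> continuous g ->
  continuous (fun t => f t * g t).
Proof. by move=> cf cg x; apply: (continuousM (cf x) (cg x)). Qed.

Lemma cont_add (f g : T -> R) : continuous f -> continuous g ->
  continuous (fun t => f t + g t).
Proof. by move=> cf cg x; apply: (continuousD (cf x) (cg x)). Qed.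

Lemma cont_cst (c : R) : continuous (fun _ : T => c).
Proof. by move=> x; apply: cst_continuous. Qed.

Lemma cmx_cst p q (A : 'M[R]_(p,q)) : cmx (fun _ => A).
Proof. by move=> i j x; apply: cst_continuous. Qed.

Lemma cmx_mul p q r (X : T -> 'M[R]_(p,q)) (Y : T -> 'M[R]_(q,r)) :
  cmx X -> cmx Y -> cmx (fun t => X t *m Y t).
Proof.
move=> cX cY i j.
under eq_fun do rewrite mxE.
apply: cont_sum => k x; exact: (continuousM (cX i k x) (cY k j x)).
Qed.

Lemma cont_det p (X : T -> 'M[R]_p) : cmx X -> continuous (fun t => \det (X t)).
Proof.
move=> cX; rewrite /determinant.
apply: cont_sum => s; apply: cont_mul; first exact: cont_cst.
by apply: cont_prod => i; apply: cX.
Qed.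

Lemma cmx_adj p (X : T -> 'M[R]_p) : cmx X -> cmx (fun t => \adj (X t)).
Proof.
move=> cX i j.
under eq_fun do rewrite mxE /cofactor.
apply: cont_mul; first exact: cont_cst.
apply: cont_det => a b. under eq_fun do rewrite !mxE. exact: cX.
Qed.

Lemma cmx_tr p q (X : T -> 'M[R]_(p,q)) : cmx X -> cmx (fun t => (X t)^T).
Proof. by move=> cX i j; under eq_fun do rewrite mxE; exact: cX. Qed.

Lemma cmx_col p1 p2 q (X : T -> 'M[R]_(p1,q)) (Y : T -> 'M[R]_(p2,q)) :
  cmx X -> cmx Y -> cmx (fun t => col_mx (X t) (Y t)).
Proof.
move=> cX cY i j; case: (splitP i) => k Hk.
  have -> : i = lshift _ k by apply/val_inj.
  by under eq_fun do rewrite col_mxEu; exact: cX.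
have -> : i = rshift _ k by apply/val_inj.
by under eq_fun do rewrite col_mxEd; exact: cY.
Qed.

End Cont.
Lemma cmx_fst (R : realType) (d m : nat) : cmx (fun x : Amb R d m => x.1).
Proof.
move=> i j x.
apply: (@continuous_comp _ _ _ fst (fun M : 'M[R]_(d+m) => M i j)); first exact: cvg_fst.
exact: coord_continuous.
Qed.
Lemma cmx_snd (R : realType) (d m : nat) : cmx (fun x : Amb R d m => x.2).
Proof.
move=> i j x.
apply: (@continuous_comp _ _ _ snd (fun M : 'rV[R]_(d+m) => M i j)); first exact: cvg_snd.
exact: coord_continuous.
Qed.
Lemma closed_int (R : realType) : closed [set x : R | x \is a Num.int].
Proof.
rewrite -[X in closed X]setCK; apply: open_closedC.
move=> x /= xZ.
set z := Num.floor x.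
have zx : (z%:~R : R) < x.
  rewrite lt_neqAle Num.Theory.floor_le andbT; apply/negP => /eqP zx.
  by apply: xZ; rewrite -zx rpred_int.
have xz1 : x < (z + 1)%:~R by apply: Num.Theory.floorD1_gt.
pose e := Num.min (x - z%:~R) ((z + 1)%:~R - x).
have e0 : 0 < e by rewrite lt_min !subr_gt0 zx xz1.
apply/nbhs_ballP; exists e => // y /=; rewrite /ball /= => xy yZ.
have [k yk] : exists k : int, y = k%:~R.
  by exists (Num.floor y); rewrite Num.Theory.floorK.
rewrite yk in xy.
have [kz|zk] := lerP k z.
  have : e <= x - k%:~R.
    rewrite ge_min; apply/orP; left; rewrite lerD2l lerN2 ler_int //.
  move: xy; rewrite ger0_norm; first by move=> /lt_le_trans H /H; rewrite ltxx.
  rewrite subr_ge0; apply: le_trans (ltW zx); by rewrite ler_int.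
have : e <= k%:~R - x.
  rewrite ge_min; apply/orP; right; rewrite lerD2r ler_int.
  lia.
move: xy; rewrite distrC ger0_norm; first by move=> /lt_le_trans H /H; rewrite ltxx.
rewrite subr_ge0; apply: (le_trans (ltW xz1)); rewrite ler_int; lia.
Qed.
Lemma closed_cont_int (R : realType) (T : topologicalType) (f : T -> R) :
  continuous f -> closed [set t | f t \is a Num.int].
Proof.
move=> cf; have := (proj1 (continuous_closedP f) cf _ (@closed_int R)).
by [].
Qed.

Lemma closed_cont_eq (R : realType) (T : topologicalType) (f : T -> R) c :
  continuous f -> closed [set t | f t = c].
Proof.
move=> cf; exact: (proj1 (continuous_closedP f) cf _ (@closed_eq _ c)).
Qed.

Lemma closed_forall (T : topologicalType) (I : Type) (P : I -> set T) :
  (forall i, closed (P i)) -> closed [set t | forall i, P i t].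
Proof.
move=> cP; have := @closed_bigI T I setT P (fun i _ => cP i).
suff -> : [set t | forall i, P i t] = \bigcap_(i in setT) P i by [].
by apply/seteqP; split => t /= H i => [_|]; apply: H.
Qed.
Section Part1.
Variables (R : realType) (d m : nat).
Local Notation n := (d + m)%N.
Local Notation Amb := (Amb R d m).

Definition Wg (g : Amb) : set 'rV[R]_n := [set w | @Zn R d m w /\ @zeroRm R d m (w *m g.1)].
Definition Sg (g : Amb) : set Amb :=
  [set x | \det x.1 = 1 /\ forall w, Wg g w -> @Zn R d m (w *m \adj x.1)].

Lemma closed_Sg g : closed (Sg g).
Proof.
have -> : Sg g = [set x : Amb | \det x.1 = 1] `&`
    [set x | forall w, [set x : Amb | Wg g w -> forall j, (w *m \adj x.1) ord0 j \is a Num.int] x].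
  by apply/seteqP; split => x /= [].
apply: closedI.
  by apply: closed_cont_eq; apply: cont_det; exact: cmx_fst.
apply: closed_forall => w; case: (pselect (Wg g w)) => Ww.
  have -> : [set x : Amb | Wg g w -> forall j, (w *m \adj x.1) ord0 j \is a Num.int] =
     [set x | forall j, [set x : Amb | (w *m \adj x.1) ord0 j \is a Num.int] x].
    by apply/seteqP; split => x /=; [move/(_ Ww)|move=> H _].
  apply: closed_forall => j; apply: closed_cont_int.
  have H := (cmx_mul (cmx_cst (A:=w)) (cmx_adj (@cmx_fst R d m))); exact: H.
have -> : [set x : Amb | Wg g w -> forall j, (w *m \adj x.1) ord0 j \is a Num.int] = setT.
  by apply/seteqP; split => x //= _ /Ww.
exact: closedT.
Qed.

Lemma int_mx_mul p q r (A : 'M[R]_(p,q)) (B : 'M[R]_(q,r)) :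
  (forall i j, A i j \is a Num.int) -> (forall i j, B i j \is a Num.int) ->
  forall i j, (A *m B) i j \is a Num.int.
Proof.
move=> hA hB i j; rewrite mxE; apply: rpred_sum => k _; exact: rpredM.
Qed.

Lemma int_det p (A : 'M[R]_p) : (forall i j, A i j \is a Num.int) -> \det A \is a Num.int.
Proof.
move=> hA; rewrite /determinant; apply: rpred_sum => s _; apply: rpredM.
  exact: rpred_sign.
by apply: rpred_prod => i _.
Qed.

Lemma int_adj p (A : 'M[R]_p) : (forall i j, A i j \is a Num.int) ->
  forall i j, \adj A i j \is a Num.int.
Proof.
move=> hA i j; rewrite mxE /cofactor; apply: rpredM.
  exact: rpred_sign.
by apply: int_det => a b; rewrite !mxE.
Qed.

Lemma adj_invmx p (A : 'M[R]_p) : \det A = 1 -> \adj A = invmx A.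
Proof.
move=> dA; rewrite /invmx; have -> : A \in unitmx by rewrite unitmxE dA unitr1.
by rewrite dA invr1 scale1r.
Qed.

Lemma det_unit p (A : 'M[R]_p) : \det A = 1 -> A \in unitmx.
Proof. by move=> dA; rewrite unitmxE dA unitr1. Qed.

End Part1.
Section Part1b.
Variables (R : realType) (d m : nat).
Local Notation n := (d + m)%N.
Local Notation Amb := (Amb R d m).

Lemma zeroRm_block (v : 'rV[R]_n) (A : 'M[R]_d) :
  @zeroRm R d m v -> v *m block_mx A 0 0 1%:M = v.
Proof.
move=> hv; rewrite -[v]hsubmxK.
have -> : lsubmx v = 0 by apply/rowP => i; rewrite !mxE; apply: hv; rewrite /= ltn_ord.
by rewrite mul_row_block !mul0mx !mulmx0 !addr0 add0r mulmx1.
Qed.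

Lemma det_block1 (A : 'M[R]_d) : \det A = 1 -> \det (block_mx A 0 0 (1%:M : 'M[R]_m)) = 1.
Proof. by move=> dA; rewrite det_ublock dA det1 mulr1. Qed.

Lemma phi_fix (g : Amb) (A : 'M[R]_d) w : \det g.1 = 1 -> \det A = 1 ->
  @zeroRm R d m (w *m g.1) ->
  w *m (g.1 *m block_mx A 0 0 1%:M *m invmx g.1) = w.
Proof.
move=> dg dA hw.
by rewrite !mulmxA zeroRm_block // mulmxK // det_unit.
Qed.

Lemma Gphi_S (g : Amb) : inG g -> setmulA (@Gamma R d m) (phiSL g) `<=` Sg g.
Proof.
move=> dg _ [[ga p] [Gga [A dA <-]] <-] /=.
have dga : \det ga.1 = 1 by case: Gga.
have dB := det_block1 dA.
have dp : \det (g.1 *m block_mx A 0 0 1%:M *m invmx g.1) = 1.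
  by rewrite !det_mulmx det_inv dB dg invr1 !mulr1.
have dx : \det (ga.1 *m (g.1 *m block_mx A 0 0 1%:M *m invmx g.1)) = 1.
  by rewrite det_mulmx dga dp mulr1.
split => // w [Zw hw].
rewrite adj_invmx //.
set P := (g.1 *m block_mx A 0 0 1%:M *m invmx g.1).
have uP : P \in unitmx by apply: det_unit.
have uga : ga.1 \in unitmx by apply: det_unit.
have e : w = (w *m invmx ga.1) *m (ga.1 *m P).
  by rewrite mulmxA mulmxKV // phi_fix.
rewrite {1}e mulmxK; last by apply: det_unit.
rewrite -adj_invmx // => j; apply: int_mx_mul => [a b|a b].
  by rewrite ord1; apply: Zw.
by apply: int_adj => i k; case: Gga => _ [+ _]; apply.
Qed.

End Part1b.
Section Part1c.
Variables (R : realType) (d m : nat).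
Local Notation n := (d + m)%N.
Local Notation Amb := (Amb R d m).

Lemma aslone_Gamma : @Gamma R d m (@aslone R d m).
Proof.
split; first by rewrite /= det1.
split => [i j|j]; rewrite !mxE /=.
  by case: (i == j); rewrite ?rpred1 ?rpred0.
exact: rpred0.
Qed.

Lemma aslone_mul (h : Amb) : aslmul (@aslone R d m) h = h.
Proof. by case: h => a b; rewrite /aslmul /aslone /= mul1mx mul0mx add0r. Qed.

Lemma H_S (g : Amb) (H : set Amb) : inG g -> is_Hg g H -> H `<=` Sg g.
Proof.
move=> dg [_ [_ [_ [_ [_ Hcl]]]]] h Hh.
have : setmulA (@Gamma R d m) H h.
  by exists (@aslone R d m, h); [split => //; exact: aslone_Gamma| exact: aslone_mul].
rewrite -Hcl; move/(closureS (Gphi_S dg)).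
by rewrite -(proj1 (closure_id _) (@closed_Sg R d m g)).
Qed.

Lemma lat0_elim (g : Amb) v : lat0 (Zng g) v ->
  exists2 w, @Zn R d m w & v = w *m g.1.
Proof.
move=> [a [y Zy <-] [b [y' Zy' <-] <-]].
exists (y - y'); last by rewrite /actA mulmxBl opprD addrACA subrr addr0.
by move=> j; rewrite !mxE; apply: rpredB.
Qed.

Lemma lat0_intro (g : Amb) w : @Zn R d m w -> lat0 (Zng g) (w *m g.1).
Proof.
move=> Zw; exists (actA w g); first by exists w.
exists (actA 0 g); first by exists 0 => // j; rewrite mxE rpred0.
by rewrite /actA mul0mx add0r addrK.
Qed.

Lemma part1_S (g h : Amb) : Sg g h ->
  lat0 (Zng g) `&` @zeroRm R d m `<=` lat0 (Zng (aslmul h g)) `&` @zeroRm R d m.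
Proof.
move=> [dh Sh] v [/lat0_elim [w Zw ->] hv]; split => //.
have := lat0_intro (aslmul h g) (Sh w (conj Zw hv)).
by rewrite /aslmul /= mulmxA -(mulmxA w) mul_adj_mx dh mulmx1.
Qed.

End Part1c.
Section Lin.
Variables (R : realType) (n : nat).

Definition Lx (X : 'M[R]_n) : 'M[R]_(n * n) := lin_mx (mulmx X).

Lemma mul_vec_Lx (M X : 'M[R]_n) : mxvec M *m Lx X = mxvec (X *m M).
Proof. by rewrite /Lx mul_vec_lin. Qed.

Lemma mx_ext p q (A B : 'M[R]_(p, q)) : (forall u : 'rV_p, u *m A = u *m B) -> A = B.
Proof.
by move=> H; apply/row_matrixP => i; rewrite -[A]mul1mx -[B]mul1mx !row_mul H.
Qed.

Lemma Lx_mul X Y : Lx X *m Lx Y = Lx (Y *m X).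
Proof.
apply: mx_ext => u; rewrite -[u]vec_mxK mulmxA !mul_vec_Lx mulmxA //.
Qed.

Lemma Lx1 : Lx 1%:M = 1%:M.
Proof. by apply: mx_ext => u; rewrite -[u]vec_mxK mul_vec_Lx mul1mx mulmx1. Qed.

Lemma Lx_inv_l X : X \in unitmx -> Lx (invmx X) *m Lx X = 1%:M.
Proof. by move=> uX; rewrite Lx_mul mulmxV // Lx1. Qed.

Lemma Lx_inv_r X : X \in unitmx -> Lx X *m Lx (invmx X) = 1%:M.
Proof. by move=> uX; rewrite Lx_mul mulVmx // Lx1. Qed.

Lemma Lx_unit X : X \in unitmx -> Lx X \in unitmx.
Proof.
move=> uX; rewrite unitmxE; apply/unitrPr; exists (\det (Lx (invmx X))).
by rewrite -det_mulmx Lx_inv_r // det1.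
Qed.

Lemma sub_mulU k (F : 'M[R]_(k, n * n)) (P Q : 'M[R]_(n * n)) (u : 'rV_(n * n)) :
  P *m Q = 1%:M -> Q *m P = 1%:M -> (u <= F *m P)%MS = (u *m Q <= F)%MS.
Proof.
move=> PQ QP; apply/idP/idP.
  by case/submxP => D ->; rewrite -!mulmxA PQ mulmx1 submxMl.
by move=> H; rewrite -[u]mulmx1 -QP mulmxA submxMr.
Qed.

Lemma mem_Fx k (F : 'M[R]_(k, n * n)) (X M : 'M[R]_n) : X \in unitmx ->
  (mxvec M <= F *m Lx (invmx X))%MS = (mxvec (X *m M) <= F)%MS.
Proof.
by move=> uX; rewrite (sub_mulU _ _ (Lx_inv_l uX) (Lx_inv_r uX)) mul_vec_Lx.
Qed.

Lemma rank_Fx k (F : 'M[R]_(k, n * n)) (X : 'M[R]_n) : X \in unitmx ->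
  \rank (F *m Lx (invmx X)) = \rank F.
Proof.
by move=> uX; rewrite mxrankMfree // row_free_unit Lx_unit // unitmx_inv.
Qed.

Lemma cmx_mxvec (T : topologicalType) (X : T -> 'M[R]_n) :
  cmx X -> cmx (fun t => mxvec (X t)).
Proof.
move=> cX i j; rewrite ord1; case/mxvec_indexP: j => a b.
by under eq_fun do rewrite mxvecE; apply: cX.
Qed.

Lemma cmx_Lx (T : topologicalType) (X : T -> 'M[R]_n) :
  cmx X -> cmx (fun t => Lx (X t)).
Proof.
move=> cX i j; rewrite /Lx /lin_mx /lin1_mx.
under eq_fun do rewrite mxE /=.
have := cmx_mxvec (cmx_mul cX (cmx_cst (A := vec_mx (delta_mx 0 i)))).
by move=> H; apply: H.
Qed.

End Lin.
Section Gram.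
Variable R : realType.

Lemma sqsum0 p (X : 'rV[R]_p) : (X *m X^T) 0 0 = 0 -> X = 0.
Proof.
rewrite mxE => H; apply/rowP => j; rewrite mxE.
have pos : forall i : 'I_p, true -> 0 <= X 0 i * X^T i 0.
  by move=> i _; rewrite mxE -expr2 sqr_ge0.
have := @psumr_eq0P _ _ xpredT _ pos H j isT.
by rewrite mxE => /eqP; rewrite mulf_eq0 orbb => /eqP.
Qed.

Lemma gram_unit k N (M : 'M[R]_(k, N)) : row_free M -> M *m M^T \in unitmx.
Proof.
move=> fM; rewrite -row_free_unit; apply: inj_row_free => u H.
have : (u *m M) *m (u *m M)^T = 0.
  by rewrite trmx_mul !mulmxA -(mulmxA u) H mul0mx.
move=> /matrixP /(_ 0 0); rewrite [RHS]mxE => /sqsum0 uM.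
by apply: (row_free_inj fM); rewrite uM mul0mx.
Qed.

Lemma gram_det0 k N (M : 'M[R]_(k, N)) : ~~ row_free M -> \det (M *m M^T) = 0.
Proof.
move=> nf; apply/eqP; apply: contraNT nf => dn.
have u : M *m M^T \in unitmx by rewrite unitmxE unitfE.
have := mxrankM_maxl M M^T; rewrite mxrank_unit // => H.
by rewrite /row_free eqn_leq H rank_leq_row.
Qed.

Lemma rf_col k N (C : 'M[R]_(k, N)) (v : 'rV[R]_N) :
  row_free C -> ~~ (v <= C)%MS -> row_free (col_mx C v).
Proof.
move=> fC nv; apply: inj_row_free => u.
rewrite -[u]hsubmxK mul_row_col => H.
set a := rsubmx u in H *; set b := lsubmx u in H *.
have [a0|an0] := eqVneq (a 0 0) 0.
  have aE : a = 0 by apply/rowP => i; rewrite ord1 a0 mxE.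
  rewrite aE mul0mx addr0 in H.
  have : b = 0 by apply: (row_free_inj fC); rewrite H mul0mx.
  by move=> ->; rewrite aE row_mx0.
exfalso; move/negP: nv; apply.
have : v = - (a 0 0)^-1 *: (b *m C).
  rewrite (mx11_scalar a) mul_scalar_mx in H.
  have H2 : a 0 0 *: v = - (b *m C) by apply/eqP; rewrite -addr_eq0 addrC H.
  by rewrite scaleNr -scalerN -H2 scalerA mulVf // scale1r.
by move=> ->; apply: scalemx_sub; apply: submxMl.
Qed.

Lemma nrf_col k N (C : 'M[R]_(k, N)) (v : 'rV[R]_N) :
  (v <= C)%MS -> ~~ row_free (col_mx C v).
Proof.
case/submxP => D vE; apply/negP => fM.
have := row_free_inj fM (x1 := row_mx D (-1%:M)) (x2 := 0).
rewrite mul_row_col mul0mx mulNmx mul1mx vE subrr => /(_ erefl) /eqP.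
rewrite -row_mx0 => /eqP /eq_row_mx [_ /matrixP /(_ 0 0)].
rewrite !mxE /= => /eqP; by rewrite oppr_eq0 oner_eq0.
Qed.

Definition gpsi k N (C : 'M[R]_(k, N)) (v : 'rV[R]_N) :=
  \det (col_mx C v *m (col_mx C v)^T) / \det (C *m C^T).

Lemma gpsi0 k N (C : 'M[R]_(k, N)) v : (v <= C)%MS -> gpsi C v = 0.
Proof. by move=> /nrf_col /gram_det0; rewrite /gpsi => ->; rewrite mul0r. Qed.

Lemma gpsi_neq0 k N (C : 'M[R]_(k, N)) v : row_free C -> ~~ (v <= C)%MS -> gpsi C v != 0.
Proof.
move=> fC nv; rewrite /gpsi mulf_eq0 invr_eq0 negb_or.
by rewrite -!unitfE -!unitmxE !gram_unit // rf_col.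
Qed.

Lemma gpsi_eq k N (C C' : 'M[R]_(k, N)) v : row_free C -> row_free C' ->
  (C == C')%MS -> gpsi C v = gpsi C' v.
Proof.
move=> fC fC' /andP [_ sC'C].
set A := C' *m pinvmx C.
have C'E : C' = A *m C by rewrite /A mulmxKpV.
have uA : A \in unitmx.
  rewrite -row_free_unit /row_free eqn_leq rank_leq_row /=.
  by rewrite -{1}(eqP fC') C'E mxrankM_maxl.
have dA : \det A != 0 by rewrite -unitfE -unitmxE.
have e1 : C' *m C'^T = A *m (C *m C^T) *m A^T.
  by rewrite C'E trmx_mul !mulmxA.
have e2 : col_mx C' v = block_mx A 0 0 1%:M *m col_mx C v.
  by rewrite mul_block_col !mul0mx mul1mx addr0 add0r C'E.
have e3 : col_mx C' v *m (col_mx C' v)^T =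
    block_mx A 0 0 1%:M *m (col_mx C v *m (col_mx C v)^T) *m (block_mx A 0 0 1%:M)^T.
  by rewrite e2 trmx_mul !mulmxA.
have dY : \det (C *m C^T) != 0 by rewrite -unitfE -unitmxE gram_unit.
rewrite /gpsi e1 e3 !det_mulmx !det_tr det_ublock det1 mulr1.
field; by rewrite dA dY.
Qed.

End Gram.
Section MeasAbs.
Local Open Scope ereal_scope.
Context d (T : measurableType d) (R : realType).
Variable mu : {measure set T -> \bar R}.

Lemma bigU_meas (I : Type) (s : seq I) (X : I -> set T) :
  (forall t, measurable (X t)) -> measurable (\big[setU/set0]_(t <- s) X t).
Proof.
move=> mX; elim: s => [|a s IH]; first by rewrite big_nil.
by rewrite big_cons; apply: measurableU.
Qed.

Lemma bigU_sub (I : Type) (s : seq I) (X : I -> set T) (Y : set T) :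
  (forall t, X t `<=` Y) -> \big[setU/set0]_(t <- s) X t `<=` Y.
Proof.
move=> hX; elim: s => [|a s IH]; first by rewrite big_nil.
by rewrite big_cons => x [/hX|/IH].
Qed.

Lemma null_bigU (I : eqType) (s : seq I) (Y : set T) (X : I -> set T) :
  measurable Y -> (forall t, measurable (X t)) ->
  (forall t, t \in s -> mu (Y `&` X t) = 0) ->
  mu (Y `&` \big[setU/set0]_(t <- s) X t) = 0.
Proof.
move=> mY mX; elim: s => [|a s IH] H0; first by rewrite big_nil setI0 measure0.
rewrite big_cons setIUr; apply: null_set_setU.
- exact: measurableI.
- by apply: measurableI => //; apply: bigU_meas.
- by apply: H0; rewrite inE eqxx.
- by apply: IH => t ts; apply: H0; rewrite inE ts orbT.
Qed.

Lemma ae_disj_sum (I : eqType) (s : seq I) (X : I -> set T) :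
  uniq s -> (forall t, measurable (X t)) -> (forall t, t \in s -> mu (X t) < +oo) ->
  (forall t t', t \in s -> t' \in s -> t != t' -> mu (X t `&` X t') = 0) ->
  mu (\big[setU/set0]_(t <- s) X t) = \sum_(t <- s) mu (X t).
Proof.
move=> + mX; elim: s => [|a s IH] /= us fin H0; first by rewrite !big_nil measure0.
case/andP: us => nas us.
rewrite !big_cons measureUfinl //; last 2 first.
- exact: bigU_meas.
- by apply: fin; rewrite inE eqxx.
rewrite null_bigU //; last first.
  move=> t ts; apply: H0; rewrite ?inE ?eqxx ?ts ?orbT //.
  by apply/eqP => at_; move: nas; rewrite at_ ts.
rewrite sube0 IH // => [t ts|t t' ts t's]; first by apply: fin; rewrite inE ts orbT.
by apply: H0; rewrite inE ?ts ?t's orbT.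
Qed.

End MeasAbs.
Section MeasAbs2.
Local Open Scope ereal_scope.
Context (R : realType).

Lemma sum_lb (I : eqType) (s : seq I) (f : I -> \bar R) (e : R) :
  (forall t, t \in s -> e%:E < f t) -> (((size s)%:R * e)%R)%:E <= \sum_(t <- s) f t.
Proof.
elim: s => [|a s IH] H0; first by rewrite big_nil mul0r.
rewrite big_cons /= -addn1 natrD mulrDl mul1r EFinD addeC.
apply: leeD; first by apply/ltW/H0; rewrite inE eqxx.
by apply: IH => t ts; apply: H0; rewrite inE ts orbT.
Qed.

Lemma pos_small (x : \bar R) : 0 < x -> x < +oo -> exists k : nat, ((k.+1%:R)^-1)%:E < x.
Proof.
move=> x0 xoo; have xf : x \is a fin_num by rewrite ge0_fin_numE // ltW.
rewrite -(fineK xf) lte_fin in x0 *.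
exists (Num.truncn (fine x)^-1).
rewrite lte_fin -[X in (_ < X)%R]invrK ltf_pV2 ?posrE ?invr_gt0 //.
exact: truncnS_gt.
Qed.
End MeasAbs2.
Section MeasAbs3.
Local Open Scope ereal_scope.
Context d (T : measurableType d) (R : realType).
Variable mu : {measure set T -> \bar R}.

Lemma uncount_contra (K : nat -> set T) (A : R -> set T) (a b : R) :
  (a < b)%R -> (forall j, measurable (K j)) -> (forall j, mu (K j) < +oo) ->
  (forall t, (a <= t <= b)%R -> measurable (A t) /\ 0 < mu (A t) /\ A t `<=` \bigcup_j K j) ->
  (forall s t, (a <= s <= b)%R -> (a <= t <= b)%R -> s != t -> mu (A s `&` A t) = 0) -> False.
Proof.
move=> ab mK fK HA Hdis.
pose Tjk (p : nat * nat) := [set t | (a <= t <= b)%R /\ ((p.2.+1%:R)^-1)%:E < mu (A t `&` K p.1)].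
have cover : `[a, b] `<=` \bigcup_(p in setT) Tjk p.
  move=> t; rewrite /= in_itv /= => tab.
  have [mA [pA sA]] := HA t tab.
  have [j pj] : exists j, 0 < mu (A t `&` K j).
    apply: contrapT => /forallNP hj.
    have : mu (A t) <= \sum_(j <oo) mu (A t `&` K j).
      apply: measure_sigma_subadditive => // [j|]; first exact: measurableI.
      by move=> x Ax; have [j _ Kx] := sA x Ax; exists j.
    rewrite eseries0 => [|j _ _]; first by move=> /(lt_le_trans pA); rewrite ltxx.
    apply/eqP; rewrite eq_le measure_ge0 andbT leNgt; apply/negP => /hj.
    by [].
  have fin : mu (A t `&` K j) < +oo.
    by apply: le_lt_trans (fK j); apply: measureIr.
  have [k hk] := pos_small pj fin.
  by exists (j, k).
case: (pselect (forall p, finite_set (Tjk p))) => Hfin.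
  have cab : countable `[a, b].
    apply: sub_countable (subset_card_le cover) _.
    apply: bigcup_countable; first exact: countableP.
    by move=> p _; apply: finite_set_countable.
  have := countable_lebesgue_measure0 cab.
  rewrite lebesgue_measure_itv /= lte_fin ab => /eqP.
  by rewrite -EFinB eqe subr_eq0 gt_eqF.
move: Hfin => /existsNP [[j k] /= Hinf].
have fKj : mu (K j) \is a fin_num by rewrite ge0_fin_numE // measure_ge0.
set c := fine (mu (K j)).
have [B BT cardB] := infinite_set_fset (Num.truncn (c * k.+1%:R)).+1 Hinf.
pose X t := if (a <= t <= b)%R then A t `&` K j else set0.
have mX : forall t, measurable (X t).
  move=> t; rewrite /X; case: ifP => tab //; apply: measurableI => //.
  by case: (HA t tab).
have BT' : forall t, t \in enum_fset B -> Tjk (j, k) t by move=> t tB; apply: BT.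
have XE : forall t, t \in enum_fset B -> X t = A t `&` K j.
  by move=> t /BT' [tab _]; rewrite /X tab.
have sumeq := @ae_disj_sum _ _ _ mu _ (enum_fset B) X (fset_uniq B) mX.
have fin' : forall t, t \in enum_fset B -> mu (X t) < +oo.
  move=> t tB; rewrite XE //; have [tab _] := BT' t tB.
  apply: le_lt_trans (fK j); apply: measureIr => //; by case: (HA t tab).
have dis' : forall t t', t \in enum_fset B -> t' \in enum_fset B -> t != t' ->
    mu (X t `&` X t') = 0.
  move=> t t' tB t'B tt'; rewrite XE // XE //.
  have [tab _] := BT' t tB; have [t'ab _] := BT' t' t'B.
  have mAt : measurable (A t) by case: (HA t tab).
  have mAt' : measurable (A t') by case: (HA t' t'ab).
  apply/eqP; rewrite eq_le measure_ge0 andbT -(Hdis t t' tab t'ab tt').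
  apply: le_measure; rewrite ?in_setE; try by repeat apply: measurableI.
  by move=> x [[? _] [? _]].
have Hsum := sumeq fin' dis'.
have le1 : \sum_(t <- enum_fset B) mu (X t) <= mu (K j).
  rewrite -Hsum; apply: le_measure; rewrite ?in_setE; [exact: bigU_meas|exact: mK|].
  apply: bigU_sub => t; rewrite /X; case: ifP => // _ x [].
have le2 : (((size (enum_fset B))%:R * (k.+1%:R)^-1)%R)%:E <= \sum_(t <- enum_fset B) mu (X t).
  by apply: sum_lb => t tB; rewrite XE //; have [_ h] := BT' t tB.
have := le_trans le2 le1; rewrite -(fineK fKj) lee_fin -/c.
rewrite ler_pdivrMr ?ltr0n // => H1.
have H2 := truncnS_gt (c * k.+1%:R).
have : ((Num.truncn (c * k.+1%:R)).+1%:R <= (size (enum_fset B))%:R :> R)%R.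
  by rewrite ler_nat.
move=> H3; have := lt_le_trans H2 (le_trans H3 H1); by rewrite ltxx.
Qed.
End MeasAbs3.
Section Top.
Variables (R : realType) (d m : nat).
Local Notation n := (d + m)%N.

Lemma vec_mx_cont : continuous (@vec_mx R n n).
Proof.
move=> u A /nbhs_ballP[e /= e0 eA].
apply/nbhs_ballP; exists e => //= v [_ uv]; apply: eA; split => // i j.
by rewrite !mxE; apply: uv.
Qed.

Definition cube (j : nat) : set (Amb R d m) :=
  [set x : Amb R d m | (forall a b, `[- j%:R, j%:R]%classic (x.1 a b)) /\
           (forall b, `[- j%:R, j%:R]%classic (x.2 0 b))].

Lemma cube_compact j : compact (cube j).
Proof.
have cI : compact (`[- j%:R, j%:R]%classic : set R) by exact: segment_compact.
have -> : cube j = [set M : 'M[R]_n | forall a b, `[- j%:R, j%:R]%classic (M a b)] `*`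
                   [set v : 'rV[R]_n | forall b, `[- j%:R, j%:R]%classic (v 0 b)].
  by apply/seteqP; split => x.
apply: compact_setX; last first.
  have := @rV_compact R n (fun _ => `[- j%:R, j%:R]%classic) (fun _ => cI).
  by [].
have -> : [set M : 'M[R]_n | forall a b, `[- j%:R, j%:R]%classic (M a b)] =
    vec_mx @` [set v : 'rV[R]_(n * n) | forall i, `[- j%:R, j%:R]%classic (v 0 i)].
  apply/seteqP; split => M.
    move=> HM; exists (mxvec M); last by rewrite mxvecK.
    by move=> i; case/mxvec_indexP: i => a b; rewrite mxvecE.
  by case => v Hv <- a b; rewrite mxE; apply: Hv.
apply: continuous_compact.
  by apply: continuous_subspaceT; apply: vec_mx_cont.
exact: (@rV_compact R (n * n) (fun _ => `[- j%:R, j%:R]%classic) (fun _ => cI)).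
Qed.

Lemma le_sum_term (I : finType) (F : I -> R) a : (forall i, 0 <= F i) -> F a <= \sum_i F i.
Proof. by move=> H0; rewrite (bigD1 a) //= lerDl sumr_ge0. Qed.

Lemma cube_cover (x : Amb R d m) : exists j, cube j x.
Proof.
pose M := \sum_a \sum_b `|x.1 a b| + \sum_b `|x.2 0 b|.
have M0 : 0 <= \sum_b `|x.2 0 b| by apply: sumr_ge0.
have M1 : 0 <= \sum_a \sum_b `|x.1 a b| by apply: sumr_ge0 => a _; apply: sumr_ge0.
exists (Num.truncn M).+1; split => [a b|b]; rewrite /= in_itv /= -ler_norml;
  apply: (le_trans _ (ltW (truncnS_gt M))).
  apply: (@le_trans _ _ (\sum_a \sum_b `|x.1 a b|)); last by rewrite /M lerDl.
  apply: (le_trans _ (le_sum_term _ (fun a => sumr_ge0 _ (fun b _ => normr_ge0 _)))).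
  exact: le_sum_term.
apply: (@le_trans _ _ (\sum_b `|x.2 0 b|)); last by rewrite /M lerDr.
exact: le_sum_term.
Qed.

Lemma closed_cube j : closed (cube j).
Proof.
have -> : cube j = [set x | forall a b, [set x : Amb R d m | `[- j%:R, j%:R]%classic (x.1 a b)] x]
   `&` [set x | forall b, [set x : Amb R d m | `[- j%:R, j%:R]%classic (x.2 0 b)] x].
  by apply/seteqP; split => x [].
apply: closedI; apply: closed_forall => a; try apply: closed_forall => b.
  apply: (proj1 (continuous_closedP _) (@cmx_fst R d m a b)); exact: itv_closed.
apply: (proj1 (continuous_closedP _) (@cmx_snd R d m 0 a)); exact: itv_closed.
Qed.

End Top.
Section KL.
Variables (R : realType) (d m : nat).
Local Notation n := (d + m)%N.
Local Notation Amb := (Amb R d m).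

Lemma asl_inv_mul (x k : Amb) : \det x.1 = 1 -> aslmul (aslinv x) (aslmul x k) = k.
Proof.
move=> dx; have ux := det_unit dx; case: k => k1 k2.
rewrite /aslmul /aslinv /=; congr (_, _); first by rewrite mulmxA mulVmx // mul1mx.
by rewrite mulNmx -(mulmxA _ (invmx x.1)) mulKmx // addrA addNr add0r.
Qed.

Lemma asl_mul_inv (x k : Amb) : \det x.1 = 1 -> aslmul x (aslmul (aslinv x) k) = k.
Proof.
move=> dx; have ux := det_unit dx; case: k => k1 k2.
rewrite /aslmul /aslinv /=; congr (_, _); first by rewrite mulmxA mulmxV // mul1mx.
by rewrite mulNmx !mulmxA addrA addrN add0r.
Qed.

Lemma meas_closed (A : set Amb) : closed A -> measurable (A : set (BorelA R d m)).
Proof.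
move=> cA; rewrite -[A]setCK; apply: measurableC.
by apply: sub_sigma_algebra; apply: closed_openC.
Qed.

Variable H : set Amb.
Hypothesis Hsub : is_subgroupG H.
Hypothesis Hclosed : closed H.

Lemma Hdet x : H x -> \det x.1 = 1.
Proof. by case: Hsub => sG _ /sG. Qed.
Lemma Hinv x : H x -> H (aslinv x).
Proof. by case: Hsub => _ [_ [_ hi]] /hi. Qed.
Lemma Hmul x y : H x -> H y -> H (aslmul x y).
Proof. by case: Hsub => _ [_ [hm _]]; apply: hm. Qed.
Lemma H1 : H (@aslone R d m).
Proof. by case: Hsub => _ []. Qed.

Definition PF k (F : 'M[R]_(k, n * n)) : set Amb := [set h | H h /\ (mxvec h.1 <= F)%MS].

Lemma closed_PF k (F : 'M[R]_(k, n * n)) : closed (PF F).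
Proof.
have -> : PF F = H `&` [set h | forall j, [set h : Amb | (mxvec h.1 *m cokermx F) 0 j = 0] h].
  apply/seteqP; split => h /= [Hh hF]; split => //.
    by move=> j; move: hF; rewrite submxE => /eqP ->; rewrite mxE.
  by rewrite submxE; apply/eqP/rowP => j; rewrite hF mxE.
apply: closedI => //; apply: closed_forall => j; apply: closed_cont_eq.
by apply: (cmx_mul (cmx_mxvec (@cmx_fst R d m)) (cmx_cst (A := cokermx F))).
Qed.

Definition Fx k (F : 'M[R]_(k, n * n)) (x : Amb) := F *m Lx (invmx x.1).

Lemma PF_inv k (F : 'M[R]_(k, n * n)) x : H x ->
  aslmul (aslinv x) @` PF F = PF (Fx F x).
Proof.
move=> Hx; have dx := Hdet Hx; have ux := det_unit dx.
apply/seteqP; split => [_ [y [Hy yF] <-]|k0 [Hk kF]].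
  split; first by apply: Hmul => //; apply: Hinv.
  by rewrite /Fx mem_Fx //= mulKVmx.
exists (aslmul x k0); last by rewrite asl_inv_mul.
split; first by apply: Hmul.
by move: kF; rewrite /Fx mem_Fx.
Qed.

Lemma PF_cap k1 k2 (F : 'M[R]_(k1, n * n)) (G : 'M[R]_(k2, n * n)) :
  PF F `&` PF G = PF (F :&: G)%MS.
Proof.
apply/seteqP; split => h /=; first by move=> [[Hh hF] [_ hG]]; split => //; rewrite sub_capmx hF hG.
by move=> [Hh]; rewrite sub_capmx => /andP[hF hG].
Qed.


Variable mu : {measure set (BorelA R d m) -> \bar R}.
Hypothesis Hhaar : is_left_haar H mu.
Hypothesis Hconn : connected H.

Lemma mu_Fx k (F : 'M[R]_(k, n * n)) x : H x -> mu (PF (Fx F x)) = mu (PF F).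
Proof.
move=> Hx; case: Hhaar => _ [inv _]; rewrite -PF_inv //.
apply: inv; first exact: Hinv.
by apply: meas_closed; apply: closed_PF.
Qed.

Lemma stab k (F : 'M[R]_(k, n * n)) : (0 < mu (PF F))%E ->
  (forall k' (G : 'M[R]_(k', n * n)), (0 < mu (PF G))%E -> (\rank F <= \rank G)%N) ->
  forall x, H x -> (Fx F x == F)%MS.
Proof.
move=> pF minF x0 Hx0; apply/negPn/negP => neq.
have rk x : H x -> \rank (Fx F x) = \rank F.
  by move=> Hx; apply: rank_Fx; apply: det_unit; apply: Hdet.
have ndis : forall x y, H x -> H y -> ~~ (Fx F x == Fx F y)%MS ->
    mu (PF (Fx F x) `&` PF (Fx F y)) = 0%E.
  move=> x y Hx Hy nxy; rewrite PF_cap.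
  apply/eqP; rewrite eq_le measure_ge0 andbT leNgt; apply/negP => p.
  have hr := minF _ _ p.
  have s1 := capmxSl (Fx F x) (Fx F y).
  have e1 : (Fx F x :&: Fx F y == Fx F x)%MS.
    by rewrite -(mxrank_leqif_eq s1).2 eqn_leq (mxrankS s1) /= rk.
  have sxy : (Fx F x <= Fx F y)%MS.
    by case/andP: e1 => _ h; exact: submx_trans h (capmxSr _ _).
  move/negP: nxy; apply.
  by rewrite -(mxrank_leqif_eq sxy).2 !rk.
have nFsub : ~~ (F <= Fx F x0)%MS.
  apply/negP => sF; move/negP: neq; apply.
  have := (mxrank_leqif_eq sF).2; rewrite rk // eqxx => /esym /andP [_ h].
  by rewrite h sF.
have [i nvi] : exists i, ~~ (row i F <= Fx F x0)%MS.
  apply: contrapT => /forallNP hi; move/negP: nFsub; apply.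
  by apply/row_subP => i; apply/negPn/negP => /(hi i).
set v := row i F.
have vF : (v <= F)%MS by apply: row_sub.
set C := row_base F.
have fC : row_free C by apply: row_base_free.
have eqC : (C :=: F)%MS by apply: eq_row_base.
pose Cx (x : Amb) := C *m Lx (\adj x.1).
have CxE x : H x -> Cx x = C *m Lx (invmx x.1).
  by move=> Hx; rewrite /Cx adj_invmx //; apply: Hdet.
have fCx x : H x -> row_free (Cx x).
  move=> Hx; rewrite CxE // /row_free mxrankMfree; first exact: fC.
  by rewrite row_free_unit Lx_unit // unitmx_inv; apply: det_unit; apply: Hdet.
have eqCx x : H x -> (Cx x :=: Fx F x)%MS.
  by move=> Hx; rewrite CxE //; apply: eqmxMr.
pose psi x := gpsi (Cx x) v.
have psi_inv x y : H x -> H y -> (Fx F x == Fx F y)%MS -> psi x = psi y.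
  move=> Hx Hy exy; apply: gpsi_eq; [exact: fCx Hx | exact: fCx Hy |].
  apply/eqmxP; apply: eqmx_trans (eqCx _ Hx) _.
  apply: eqmx_trans _ (eqmx_sym (eqCx _ Hy)); exact/eqmxP.
have psi1 : psi (@aslone R d m) = 0.
  rewrite /psi /Cx /= adj_invmx ?det1 // invmx1 Lx1 mulmx1.
  by apply: gpsi0; rewrite eqC.
have psix0 : psi x0 != 0.
  by apply: gpsi_neq0; [exact: fCx Hx0 | rewrite (eqCx _ Hx0)].
have cCx : cmx Cx.
  exact: (cmx_mul (cmx_cst (A := C)) (cmx_Lx (cmx_adj (@cmx_fst R d m)))).
have cM : cmx (fun x => col_mx (Cx x) v) by apply: cmx_col => //; exact: cmx_cst.
have cnum : continuous (fun x => \det (col_mx (Cx x) v *m (col_mx (Cx x) v)^T)).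
  by apply: cont_det; apply: cmx_mul => //; apply: cmx_tr.
have cden : continuous (fun x => \det (Cx x *m (Cx x)^T)).
  by apply: cont_det; apply: cmx_mul => //; apply: cmx_tr.
have cpsi : {within H, continuous psi}.
  apply: continuous_in_subspaceT => x; rewrite in_setE => Hx.
  have dn : \det (Cx x *m (Cx x)^T) != 0.
    by rewrite -unitfE -unitmxE; apply: gram_unit; apply: fCx.
  rewrite /psi /gpsi; exact: (continuousM (cnum x) (@continuousV _ _ (fun y => \det (Cx y *m (Cx y)^T)) x dn (cden x))).
have cI : connected (psi @` H) by apply: connected_continuous_connected.
have iI := proj1 (connected_intervalP _) cI.
set c := psi x0.
pose a := if 0 < c then 0 else c; pose b := if 0 < c then c else 0.
have ab : a < b.
  rewrite /a /b; case: (ltgtP 0 c) => hc //.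
  by move: psix0; rewrite -/c -hc eqxx.
have aI : (psi @` H) a by rewrite /a; case: ifP => _; [exists (@aslone R d m) => //; exact: H1 | exists x0].
have bI : (psi @` H) b by rewrite /b; case: ifP => _; [exists x0 | exists (@aslone R d m) => //; exact: H1].
have ch : forall t, exists y, (a <= t <= b) -> H y /\ psi y = t.
  move=> t; case: (pselect (a <= t <= b)) => tab; last by exists x0.
  by have [y Hy <-] := iI _ _ aI bI _ tab; exists y.
have [xt hxt] := choice ch.
pose A t := PF (Fx F (xt t)).
apply: (@uncount_contra _ _ _ mu (@cube R d m) A a b ab).
- by move=> j; apply: meas_closed; apply: closed_cube.
- by move=> j; case: Hhaar => _ [_ [cpt _]]; apply: cpt; apply: cube_compact.
- move=> t tab; have [Hy _] := hxt t tab; split; first by apply: meas_closed; apply: closed_PF.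
  split; first by rewrite /A mu_Fx.
  by move=> x _; have [j hj] := cube_cover x; exists j.
- move=> s t sab tab st; have [Hs ps] := hxt s sab; have [Ht pt] := hxt t tab.
  apply: ndis => //; apply/negP => e; move/negP: st; apply.
  by rewrite -ps -pt; apply/eqP; apply: psi_inv.
Qed.


Lemma KL p (E : 'M[R]_(p, n * n)) : (0 < mu (PF E))%E ->
  forall h, H h -> (mxvec h.1 <= E)%MS.
Proof.
move=> pE.
pose P r := `[< exists k (F : 'M[R]_(k, n * n)), (0 < mu (PF F))%E /\ \rank F = r >].
have exP : exists r, P r by exists (\rank E); apply/asboolP; exists p, E.
case: (ex_minnP exP) => r /asboolP [k [F [pF rF]]] minr.
have minF : forall k' (G : 'M[R]_(k', n * n)), (0 < mu (PF G))%E -> (\rank F <= \rank G)%N.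
  by move=> k' G pG; rewrite rF; apply: minr; apply/asboolP; exists k', G.
have st := stab pF minF.
have [y Py] : exists y, PF F y.
  apply: contrapT => /forallNP h.
  have e0 : PF F = set0 by apply/seteqP; split => x // /h.
  by move: pF; rewrite e0 measure0 ltxx.
have one : (mxvec (1%:M : 'M[R]_n) <= F)%MS.
  case: Py => Hy yF; have /andP [s1 _] := st y Hy.
  apply: submx_trans s1; rewrite /Fx mem_Fx ?mulmx1 //.
  by apply: det_unit; apply: Hdet.
have allF : forall x, H x -> (mxvec x.1 <= F)%MS.
  move=> x Hx; have /andP [_ s2] := st x Hx.
  have := submx_trans one s2; rewrite /Fx mem_Fx ?mulmx1 //.
  by apply: det_unit; apply: Hdet.
have capE : (0 < mu (PF (F :&: E)%MS))%E.
  rewrite -PF_cap; suff -> : PF F `&` PF E = PF E by [].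
  by apply/seteqP; split => x; [case|move=> [Hx xE]; split => //; split => //; apply: allF].
have hr := minF _ _ capE.
have s1 := capmxSl F E.
have e1 : (F :&: E == F)%MS.
  by rewrite -(mxrank_leqif_eq s1).2 eqn_leq (mxrankS s1) /= hr.
move=> h Hh; apply: submx_trans (allF h Hh) _.
by case/andP: e1 => _ s2; apply: submx_trans s2 (capmxSr _ _).
Qed.

End KL.
Section Final.
Variables (R : realType) (d m : nat).
Local Notation n := (d + m)%N.
Local Notation Amb := (Amb R d m).

Lemma zeroRm_lsub (v : 'rV[R]_n) : @zeroRm R d m v <-> lsubmx v = 0.
Proof.
split => [hv|hv i hi].
  by apply/rowP => j; rewrite !mxE; apply: hv; rewrite /= ltn_ord.
have -> : i = lshift m (Ordinal hi) by apply/val_inj.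
by move/rowP: hv => /(_ (Ordinal hi)); rewrite !mxE.
Qed.

Definition Emat (g : Amb) (w : 'rV[R]_n) : 'M[R]_(n * n) :=
  kermx (lin_mx (mulmx w) *m lin_mx (mulmxr (g.1 *m col_mx (1%:M : 'M[R]_d) 0))).

Lemma memE (g : Amb) w (M : 'M[R]_n) :
  (mxvec M <= Emat g w)%MS <-> @zeroRm R d m (w *m M *m g.1).
Proof.
rewrite /Emat sub_kermx mulmxA !mul_vec_lin mxvec_eq0 /= zeroRm_lsub.
have -> : w *m M *m (g.1 *m col_mx 1%:M 0) = lsubmx (w *m M *m g.1).
  by rewrite mulmxA -{1}[w *m M *m g.1]hsubmxK mul_row_col mulmx1 mulmx0 addr0.
by split => [/eqP|->].
Qed.

End Final.
Section Final2.
Variables (R : realType) (d m : nat).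
Local Notation n := (d + m)%N.
Local Notation Amb := (Amb R d m).

Definition wk (k : nat) : 'rV[R]_n :=
  map_mx (fun z : int => z%:~R) (odflt 0 (choice.unpickle k : option 'rV[int]_n)).

Lemma wk_surj (w : 'rV[R]_n) : @Zn R d m w -> exists k, wk k = w.
Proof.
move=> Zw; exists (choice.pickle (map_mx (fun x : R => Num.floor x) w)).
rewrite /wk choice.pickleK /=; apply/rowP => j; rewrite !mxE.
by rewrite Num.Theory.floorK //; apply: Zw.
Qed.

Variables (g : Amb) (H : set Amb).
Hypothesis dg : inG g.
Hypothesis HHg : is_Hg g H.

Let Hsub : is_subgroupG H. Proof. by case: HHg. Qed.
Let Hclosed : closed H. Proof. by case: HHg => _ []. Qed.
Let Hconn : connected H. Proof. by case: HHg => _ [_ []]. Qed.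

Variable mu : {measure set (BorelA R d m) -> \bar R}.
Hypothesis Hhaar : is_left_haar H mu.

Definition Nk (k : nat) : set Amb :=
  if pselect (@zeroRm R d m (wk k *m g.1)) then set0 else PF H (Emat g (wk k)).

Lemma Nk_negl k : mu.-negligible (Nk k).
Proof.
rewrite /Nk; case: pselect => hk; first exact: negligible_set0.
apply/negligibleP; first by apply: meas_closed; apply: closed_PF.
apply/eqP; rewrite eq_le measure_ge0 andbT leNgt; apply/negP => p.
have := KL Hsub Hclosed Hhaar Hconn p (H1 Hsub).
by move/memE; rewrite /= mulmx1.
Qed.

Lemma part2 : mu.-negligible
       [set h | H h /\
          lat0 (Zng (aslmul h g)) `&` @zeroRm R d m <> lat0 (Zng g) `&` @zeroRm R d m].
Proof.
apply: (negligibleS _ (negligible_bigcup Nk_negl)).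
move=> h [Hh neq].
have sub := part1_S (H_S dg HHg Hh).
have [v [vhg nvg]] : exists v, (lat0 (Zng (aslmul h g)) `&` @zeroRm R d m) v /\
    ~ (lat0 (Zng g) `&` @zeroRm R d m) v.
  apply: contrapT => /forallNP hv; apply: neq; apply/seteqP; split => //.
  move=> x hx; apply: contrapT => nx; apply: (hv x); split => //.
case: vhg => /lat0_elim [w Zw vE] vV.
rewrite /= in vE.
case: (pselect (@zeroRm R d m (w *m g.1))) => wg.
  exfalso; apply: nvg; split => //.
  have Hi := Hinv Hsub Hh.
  have [_ Si] := H_S dg HHg Hi.
  have := Si w (conj Zw wg).
  rewrite /aslinv /= adj_invmx; last by rewrite det_inv (Hdet Hsub Hh) invr1.
  rewrite invmxK => Zwh.
  by rewrite vE mulmxA; apply: lat0_intro.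
have [k wkE] := wk_surj Zw.
exists k => //; rewrite /Nk; case: pselect => hk; first by move: (hk); rewrite wkE.
split => //; apply/memE; rewrite wkE -mulmxA -vE //.
Qed.

End Final2.

Theorem proposition3p6 (R : realType) (d m : nat) (g : Amb R d m)
  (H : set (Amb R d m)) :
  inG g -> is_Hg g H ->
  (forall h, H h ->
     lat0 (Zng g) `&` @zeroRm R d m `<=` lat0 (Zng (aslmul h g)) `&` @zeroRm R d m)
  /\
  (forall mu : {measure set (BorelA R d m) -> \bar R}, is_left_haar H mu ->
     mu.-negligible
       [set h | H h /\
          lat0 (Zng (aslmul h g)) `&` @zeroRm R d m <> lat0 (Zng g) `&` @zeroRm R d m]).
Proof.
move=> dg HHg; split.
  by move=> h Hh; apply: part1_S; apply: (H_S dg HHg Hh).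
by move=> mu Hm; apply: part2.
Qed.
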